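(* Let $G_n$ and $T$ be as in the context, and let $k\geq n+2$. Let $W=v_0e_0v_1e_1\cdots e_{k-1}v_k$ be a walk in $T$ (so each $e_i$ is an arc of $T$ from $v_i$ to $v_{i+1}$). Then $l(e_0)\leq l(e_{n+1})$, where $l(e)$ denotes the label of the arc $e$.
   Context: Let $A$ be a finite alphabet with a linear order $<$, extended to the lexicographic order on words. Let $\mathcal{F}$ be a set of words over $A$ (forbidden words). A word $w$ is in the language if the bi-infinite periodic sequence $\cdots www\cdots$ contains no element of $\mathcal{F}$ as a factor; $W_k$ denotes the set of words of length $k$ in the language. Fix $n\geq 1$ and consider the digraph with vertex set $A^n$ and arcs $(as,sb)$ for $a,b\in A$, $s\in A^{n-1}$, $asb\in W_{n+1}$, the label of $(as,sb)$ being $b$. The de Bruijn graph of span $n$, $G_n$, is a strongly connected component of maximum size of this digraph; vertices are identified with their words. Let $m$ be the vertex of $G_n$ whose word is lexicographically largest. For each vertex $v$, let $e(v)$ be the arc of $G_n$ with tail $v$ having maximum label. $T$ is the spanning subgraph of $G_n$ with arc set $\{e(v): v\in V(G_n), v\neq m\}$. *)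

(* Defs.v *)
From HB Require Import structures.
From mathcomp Require Import all_boot all_order.
From Stdlib Require Import Relations.
Set Implicit Arguments. Unset Strict Implicit. Unset Printing Implicit Defensive.
Import Order.TTheory.
Local Open Scope order_scope.

Section DeBruijn.
Variables (d : Order.disp_t) (A : finOrderType d).

(* u is a factor of the bi-infinite periodic word ...www... *)
Definition per_factor (u w : seq A) : Prop :=
  exists i : nat, forall j : nat, j < size u ->
    onth u j = onth w ((i + j) %% size w).

Definition in_lang (F : seq A -> Prop) (w : seq A) : Prop :=
  0 < size w /\ forall u, F u -> ~ per_factor u w.

Variables (F : seq A -> Prop) (n : nat).

(* Arcs of the digraph on A^n are the words asb in W_(n+1):
   tail = as = take n w, head = sb = behead w, label = b = last letter. *)
Definition arc_tail (w : (n.+1).-tuple A) : seq A := take n w.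
Definition arc_head (w : (n.+1).-tuple A) : seq A := behead w.
Definition arc_label (w : (n.+1).-tuple A) : A := tnth w ord_max.

Definition db_adj (u v : n.-tuple A) : Prop :=
  exists w : (n.+1).-tuple A,
    in_lang F w /\ arc_tail w = u /\ arc_head w = v.

Definition db_reach : relation (n.-tuple A) := clos_refl_trans _ db_adj.

Definition is_scc (S : {set n.-tuple A}) : Prop :=
  exists x, forall y, y \in S <-> (db_reach x y /\ db_reach y x).

Definition is_Gn (S : {set n.-tuple A}) : Prop :=
  is_scc S /\ forall S', is_scc S' -> #|S'| <= #|S|.

Definition Gn_arc (S : {set n.-tuple A}) (w : (n.+1).-tuple A) : Prop :=
  in_lang F w /\
  (exists2 u, u \in S & arc_tail w = u) /\
  (exists2 v, v \in S & arc_head w = v).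

Definition is_lex_max (S : {set n.-tuple A}) (m : n.-tuple A) : Prop :=
  m \in S /\ forall v, v \in S -> (val v : seqlexi A) <= (val m : seqlexi A).

Definition T_arc (S : {set n.-tuple A}) (m : n.-tuple A)
    (w : (n.+1).-tuple A) : Prop :=
  Gn_arc S w /\ arc_tail w <> val m /\
  forall w', Gn_arc S w' -> arc_tail w' = arc_tail w ->
    arc_label w' <= arc_label w.

End DeBruijn.

(* Main.v *)
Require Import Defs.
From HB Require Import structures.
From mathcomp Require Import all_boot all_order.
From Stdlib Require Import Relations.
Import Order.TTheory.
Local Open Scope order_scope.

Lemma onth_rot1 (T : Type) (w : seq T) k : (k < size w)%N ->
  onth (rot 1 w) k = onth w ((k + 1) %% size w).
Proof.
case: w => [//|x w] /= Hk.
rewrite rot1_cons -cats1 onth_cat.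
case: ltnP => H.
  by rewrite modn_small ?addn1 //.
have -> : k = size w by apply/eqP; rewrite eqn_leq H -ltnS Hk.
by rewrite subnn addn1 modnn.
Qed.

Lemma per_factor_rot1 d (T : finOrderType d) (u w : seq T) : (0 < size w)%N ->
  per_factor u (rot 1 w) -> per_factor u w.
Proof.
move=> Hw [i Hi]; exists (i + 1)%N => j Hj.
rewrite Hi // size_rot onth_rot1 ?ltn_mod // modnDml.
by rewrite addnAC.
Qed.

Lemma in_lang_rot d (T : finOrderType d) (F : seq T -> Prop) (w : seq T) j :
  in_lang F w -> in_lang F (rot j w).
Proof.
move=> Hw; rewrite rot_minn.
move: (geq_minr j (size w)); move: (minn j (size w)) => {}j.
elim: j => [|j IH] Hj; first by rewrite rot0.
rewrite rotS //; have := IH (ltnW Hj) => -[H0 H1].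
split; first by rewrite size_rot.
move=> u Fu Hu; apply: (H1 u Fu); apply: per_factor_rot1 => //.
Qed.

Lemma rot1_last (T : Type) (x0 : T) (s : seq T) n : size s = n.+1 ->
  nth x0 (rot 1 s) n = nth x0 s 0.
Proof.
case: s => [//|x s] /= [Hs]; rewrite rot1_cons -cats1 nth_cat Hs ltnn subnn //.
Qed.

Lemma rot1_take (T : Type) (s : seq T) n : size s = n.+1 ->
  take n (rot 1 s) = behead s.
Proof.
case: s => [//|x s] /= [Hs]; rewrite rot1_cons -cats1 -Hs take_size_cat //.
Qed.

Theorem lemma2 (d : Order.disp_t) (A : finOrderType d) (F : seq A -> Prop)
    (n : nat) (hn : (1 <= n)%N)
    (S : {set n.-tuple A}) (hS : is_Gn F S)
    (m : n.-tuple A) (hm : is_lex_max S m)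
    (k : nat) (hk : (n.+2 <= k)%N)
    (e : nat -> (n.+1).-tuple A)
    (he : forall i, (i < k)%N -> T_arc F S m (e i))
    (hwalk : forall i, (i.+1 < k)%N -> arc_head (e i) = arc_tail (e i.+1)) :
  arc_label (e 0%N) <= arc_label (e n.+1).
Proof.
set w := e n.
pose R j := [tuple of rot j w].
pose hv j := behead_tuple (R j).
have sw : size w = n.+1 by rewrite size_tuple.
have Hlw : in_lang F w by case: (he n (ltnW hk)) => -[].
have HlR : forall j, in_lang F (R j) by move=> j; exact: in_lang_rot.
have Hadj : forall j, (j <= n)%N -> db_adj F (hv j) (hv j.+1).
  move=> j Hj; exists (R j.+1); split => //; split => //.
  rewrite /arc_tail /= rotS ?sw // rot1_take // size_rot sw //.
pose x0 := tnth w ord0.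
have [[_ [[u Hu Htu] _]] [_ Hmax]] := he n.+1 hk.
have HtR1 : arc_tail (R 1%N) = arc_tail (e n.+1).
  rewrite -hwalk // /arc_tail /= rot1_take //.
have Hvn : hv n.+1 = u.
  apply: val_inj; have Hrs : rot n.+1 w = w by rewrite -{1}sw rot_size.
  rewrite /= Hrs -Htu -hwalk //.
have Hreach : forall i, (i <= n)%N -> db_reach F (hv (n - i).+1) u.
  elim => [|i IH] Hi; first by rewrite subn0 Hvn; apply: rt_refl.
  apply: rt_trans (IH (ltnW Hi)); apply: rt_step.
  have -> : (n - i = (n - i.+1).+1)%N by rewrite subnSK.
  by apply: Hadj; rewrite subnSK // leq_subr.
have Hr1 : db_reach F (hv 1%N) u.
  have := Hreach n (leqnn n); rewrite subnn; exact.
have Ha1 : db_adj F u (hv 1%N).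
  exists (R 1%N); split => //; split => //; rewrite HtR1 Htu //.
have Hv1 : hv 1%N \in S.
  case: hS => -[x Hxs] _; apply/Hxs; move/Hxs: Hu => [Hxu Hux]; split.
  - apply: rt_trans Hxu _; exact: rt_step.
  - exact: rt_trans Hr1 Hux.
have Hle := Hmax (R 1%N) (conj (HlR 1%N) (conj (ex_intro2 _ _ u Hu (etrans HtR1 Htu))
    (ex_intro2 _ _ (hv 1%N) Hv1 erefl))) HtR1.
suff <- : arc_label (R 1%N) = arc_label (e 0%N) by [].
rewrite /arc_label !(tnth_nth x0) /= rot1_last //.
have Hstep : forall i j, (i.+1 < k)%N -> (j < n)%N ->
    nth x0 (e i.+1) j = nth x0 (e i) j.+1.
  move=> i j Hi Hj.
  rewrite -(nth_take x0 Hj) -[take n _]/(arc_tail (e i.+1)) -hwalk //.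
  by rewrite /arc_head nth_behead.
have Hch : forall i, (i <= n)%N -> nth x0 (e i) (n - i) = nth x0 (e 0%N) n.
  elim => [|i IH] Hi; first by rewrite subn0.
  rewrite Hstep ?subnSK -?IH //; [exact: ltnW | exact: leq_ltn_trans Hi (ltnW hk) | exact: leq_subr].
have := Hch n (leqnn n); rewrite subnn; exact.
Qed.
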